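(* Let $\mathcal{G}$ be a causal diagram with observed endogenous variables $\mathbf{O}$ and latent endogenous variables $\mathbf{L}$, let $\Pi$ be a policy space, and let $\mathbf{Y}\subseteq\mathbf{V}$. If $\mathbf{Y}\cap\mathbf{L}\neq\emptyset$, then $P(\mathbf{y}\mid\mathrm{do}(\pi))$ is not identifiable with respect to $\langle\mathcal{G},\Pi\rangle$.
   Context: A structural causal model (SCM) $M = \langle \mathbf{U}, \mathbf{V}, \mathcal{F}, P(\mathbf{u})\rangle$ has exogenous variables $\mathbf{U}$ drawn from $P(\mathbf{u})$, endogenous variables $\mathbf{V}$, and for each $V$ a function $V\leftarrow f_V(\mathrm{Pa}_V,U_V)$. A POSCM is $\langle M,\mathbf{O},\mathbf{L}\rangle$ with $\mathbf{O},\mathbf{L}$ a partition of $\mathbf{V}$ into observed and latent variables; $P(\mathbf{o})$ is the observational distribution. The causal diagram $\mathcal{G}$ has an arrow $V_j\to V_i$ when $V_j\in\mathrm{Pa}_{V_i}$ and a bidirected arrow $V_i\leftrightarrow V_j$ when $U_{V_i}\cap U_{V_j}\ne\emptyset$; $\mathcal{M}_{\langle\mathcal{G}\rangle}$ is the class of POSCMs with diagram $\mathcal{G}$. There is a distinguished action variable $X\in\mathbf{O}$; $\mathcal{G}_{\overline{X}}$ is $\mathcal{G}$ with arrows into $X$ removed. A policy space $\Pi$ is determined by covariates $\mathrm{Pa}(\Pi)\subseteq\mathbf{O}\setminus\mathrm{De}(X)_{\mathcal{G}_{\overline{X}}}$ and consists of all maps $\pi(x\mid\mathrm{pa}(\Pi))$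 to distributions over $X$. $\mathrm{do}(\pi)$ replaces $f_X$ by drawing $X\sim\pi$: $P(\mathbf{v}\mid\mathrm{do}(\pi))=\sum_{\mathbf{u}}P(\mathbf{u})\prod_{V\ne X}P(v\mid\mathrm{pa}_V,u_V)\pi(x\mid\mathrm{pa}(\Pi))$. $P(\mathbf{y}\mid\mathrm{do}(\pi))$ is identifiable w.r.t. $\langle\mathcal{G},\Pi\rangle$ if $P(\mathbf{y}\mid\mathrm{do}(\pi);M)$ is uniquely computable from $P(\mathbf{o};M)$ and $\pi$ for every $M\in\mathcal{M}_{\langle\mathcal{G}\rangle}$ and every $\pi\in\Pi$. *)

(* Defs.v *)
From HB Require Import structures.
From mathcomp Require Import all_boot all_order all_algebra.
Set Implicit Arguments. Unset Strict Implicit. Unset Printing Implicit Defensive.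
Import Order.TTheory GRing.Theory Num.Theory.
Local Open Scope ring_scope.

Definition asg (n : nat) (d : 'I_n -> nat) := {dffun forall i : 'I_n, 'I_(d i)}.

(* A causal diagram: directed edges (dir j i means j -> i) and bidirected edges. *)
Record diagram (n : nat) := Diagram { dir : rel 'I_n; bi : rel 'I_n }.

Definition is_causal_diagram n (G : diagram n) : Prop :=
  (forall i j, dir G j i -> ~~ connect (dir G) i j) /\
  (forall i j, bi G i j = bi G j i) /\ (forall i, ~~ bi G i i).

Definition parents n (G : diagram n) (i : 'I_n) : {set 'I_n} :=
  [set j | dir G j i].

(* Descendants of X (including X) in G with arrows into X removed. *)
Definition desc_cutX n (G : diagram n) (X : 'I_n) : {set 'I_n} :=
  [set k | connect (fun a b => dir G a b && (b != X)) X k].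

Definition agree n (d : 'I_n -> nat) (A : {set 'I_n}) (v w : asg d) : bool :=
  [forall i in A, v i == w i].

(* An SCM over endogenous variables 'I_n with domains d: exogenous variables
   'I_m with domains 'I_(e k), a joint distribution Pu over them, the set
   Uof i of exogenous arguments of each endogenous i, and functions f i. *)
Record SCM (R : numDomainType) (n : nat) (d : 'I_n -> nat) := MkSCM {
  nU : nat;
  eU : 'I_nU -> nat;
  Pu : {dffun forall k : 'I_nU, 'I_(eU k)} -> R;
  Uof : 'I_n -> {set 'I_nU};
  fV : forall i : 'I_n, asg d -> {dffun forall k : 'I_nU, 'I_(eU k)} -> 'I_(d i)
}.
Arguments Pu {R n d} M _ : rename.
Arguments Uof {R n d} M _ : rename.
Arguments fV {R n d} M i _ _ : rename.
Arguments nU {R n d} M : rename.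
Arguments eU {R n d} M _ : rename.

Definition exo (R : numDomainType) n (d : 'I_n -> nat) (M : SCM R d) :=
  {dffun forall k : 'I_(nU M), 'I_(eU M k)}.

(* M belongs to the class M_<G>: P(u) is a distribution, f_V depends only on
   Pa_V (the parents in G) and U_V, and V_i <-> V_j iff U_Vi and U_Vj meet. *)
Definition in_class (R : numDomainType) n (d : 'I_n -> nat) (G : diagram n)
    (M : SCM R d) : Prop :=
  (forall u : exo M, 0 <= Pu M u) /\ (\sum_(u : exo M) Pu M u = 1) /\
  (forall i (v v' : asg d) (u u' : exo M), agree (parents G i) v v' ->
       [forall k in Uof M i, u k == u' k] -> fV M i v u = fV M i v' u') /\
  (forall i j, i != j -> bi G i j = (Uof M i :&: Uof M j != set0)).

Definition Pobs (R : numDomainType) n (d : 'I_n -> nat) (M : SCM R d)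
    (v : asg d) : R :=
  \sum_(u : exo M) Pu M u * \prod_i (if v i == fV M i v u then 1 else 0).

Definition Pdo (R : numDomainType) n (d : 'I_n -> nat) (M : SCM R d)
    (X : 'I_n) (pi : asg d -> 'I_(d X) -> R) (v : asg d) : R :=
  \sum_(u : exo M) Pu M u * (\prod_(i | i != X) (if v i == fV M i v u then 1 else 0))
         * pi v (v X).

(* Marginal on A of a distribution on full assignments, evaluated at the
   A-part of v:  P(a) = sum_{w agreeing with v on A} P(w). *)
Definition marg (R : numDomainType) n (d : 'I_n -> nat) (A : {set 'I_n})
    (P : asg d -> R) (v : asg d) : R :=
  \sum_(w | agree A w v) P w.

Definition is_policy (R : numDomainType) n (d : 'I_n -> nat) (X : 'I_n)
    (C : {set 'I_n}) (pi : asg d -> 'I_(d X) -> R) : Prop :=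
  (forall v x, 0 <= pi v x) /\ (forall v, \sum_x pi v x = 1) /\
  (forall v w, agree C v w -> pi v = pi w).

Definition identifiable (R : numDomainType) n (d : 'I_n -> nat) (G : diagram n)
    (O : {set 'I_n}) (X : 'I_n) (C : {set 'I_n}) (Y : {set 'I_n}) : Prop :=
  forall (M1 M2 : SCM R d), in_class G M1 -> in_class G M2 ->
    (forall v, marg O (Pobs M1) v = marg O (Pobs M2) v) ->
    forall (pi : asg d -> 'I_(d X) -> R), is_policy C pi ->
      forall v, marg Y (Pdo M1 pi) v = marg Y (Pdo M2 pi) v.

(* Main.v *)
Require Import Defs.
From HB Require Import structures.
From mathcomp Require Import all_boot all_order all_algebra.
From mathcomp Require Import reals.
Import Order.TTheory GRing.Theory Num.Theory.

Section Constr.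
Local Open Scope ring_scope.
Variables (R : realType) (n : nat) (d : 'I_n -> nat) (G : diagram n).

Definition nU0 := #|{: 'I_n * 'I_n}|.
Definition eU0 : 'I_nU0 -> nat := fun _ => 1%N.
Definition exo0 := {dffun forall k : 'I_nU0, 'I_(eU0 k)}.
Definition u00 : exo0 := [ffun k => ord0].
Definition Pu0 (u : exo0) : R := if u == u00 then 1 else 0.
Definition Uof0 (i : 'I_n) : {set 'I_nU0} :=
  [set k | bi G (enum_val k).1 (enum_val k).2 &&
           (((enum_val k).1 == i) || ((enum_val k).2 == i))].

Definition mkM (c : asg d) : SCM R d :=
  @MkSCM R n d nU0 eU0 Pu0 Uof0 (fun i _ _ => c i).

Lemma sumPu0 : \sum_(u : exo0) Pu0 u = 1.
Proof.
rewrite (bigD1 u00) //= /Pu0 eqxx big1 ?addr0 // => u /negbTE ->; by [].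
Qed.

Lemma mkM_in_class c : is_causal_diagram G -> in_class G (mkM c).
Proof.
move=> [_ [Hs Hi]]; split; [|split; [|split]].
- move=> u /=; rewrite /Pu0; case: ifP => _; [exact: ler01|exact: lexx].
- exact: sumPu0.
- by [].
- move=> i j ij /=; apply/idP/idP.
  + move=> hb; apply/set0Pn; exists (enum_rank (i, j)).
    rewrite !inE enum_rankK /= hb eqxx /=.
    by rewrite eqxx orbT.
  + case/set0Pn => k; rewrite !inE; case: (enum_val k) => a b /=.
    case/andP=> /andP[hab h1] /andP[_ h2].
    case/orP: h1 => /eqP E1; case/orP: h2 => /eqP E2; subst.
    * by rewrite eqxx in ij.
    * by [].
    * by rewrite Hs.
    * by rewrite eqxx in ij.
Qed.

Lemma prod_ind (A : pred 'I_n) (v c : asg d) :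
  \prod_(i | A i) (if v i == c i then 1 else 0 : R) =
  if [forall i, A i ==> (v i == c i)] then 1 else 0.
Proof.
case: ifP => h.
  by apply: big1 => i Ai; move/forallP: h => /(_ i); rewrite Ai /= => ->.
move/negbT: h; rewrite negb_forall => /existsP[i]; rewrite negb_imply.
case/andP=> Ai ne; by rewrite (bigD1 i) //= (negbTE ne) mul0r.
Qed.

Lemma Pobs_mkM c v : Pobs (mkM c) v = if v == c then 1 else 0.
Proof.
rewrite /Pobs /= -big_distrl /= sumPu0 mul1r prod_ind.
congr (if _ then _ else _); apply/forallP/eqP.
  by move=> h; apply/ffunP => i; apply/eqP; move: (h i); rewrite implyTb.
by move=> -> i; rewrite eqxx implybT.
Qed.

Lemma marg_ind (A : {set 'I_n}) (c v : asg d) :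
  marg A (fun w => if w == c then 1 else 0 : R) v = if agree A c v then 1 else 0.
Proof.
rewrite /marg; case: ifP => h.
  rewrite (bigD1 c) //= eqxx big1 ?addr0 // => w /andP[_ /negbTE ->]; by [].
apply: big1 => w hw; case: eqP => // E; subst; by rewrite hw in h.
Qed.

Lemma Pdo_mkM (X : 'I_n) (c : asg d) (pi : asg d -> 'I_(d X) -> R) v :
  (forall w x, pi w x = if x == c X then 1 else 0) ->
  Pdo (mkM c) pi v = if v == c then 1 else 0.
Proof.
move=> hpi; rewrite /Pdo /= -!big_distrl /= sumPu0 mul1r prod_ind hpi.
case: (eqVneq v c) => [->|ne].
  have -> : [forall i, (i != X) ==> (c i == c i)] by apply/forallP => i; rewrite eqxx implybT.
  by rewrite !eqxx mulr1.
case: ifP => h; last by rewrite mul0r.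
case: eqP => hx; last by rewrite mulr0.
exfalso; move/eqP: ne; apply; apply/ffunP => i.
case: (eqVneq i X) => [->|iX]; first exact: hx.
by move/forallP: h => /(_ i); rewrite iX /= => /eqP.
Qed.

Lemma marg_Pobs (A : {set 'I_n}) c v :
  marg A (Pobs (mkM c)) v = if agree A c v then 1 else 0.
Proof. by rewrite -marg_ind; apply: eq_bigr => w _; exact: Pobs_mkM. Qed.

Lemma marg_Pdo (A : {set 'I_n}) (X : 'I_n) (c : asg d) (pi : asg d -> 'I_(d X) -> R) v :
  (forall w x, pi w x = if x == c X then 1 else 0) ->
  marg A (Pdo (mkM c) pi) v = if agree A c v then 1 else 0.
Proof. by move=> h; rewrite -marg_ind; apply: eq_bigr => w _; exact: Pdo_mkM. Qed.

End Constr.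

Theorem corollary1 (R : realType) (n : nat) (d : 'I_n -> nat)
    (G : diagram n) (O : {set 'I_n}) (X : 'I_n) (C : {set 'I_n})
    (Y : {set 'I_n}) :
  is_causal_diagram G ->
  (forall i, 1 < d i) ->
  X \in O ->
  C \subset O :\: desc_cutX G X ->
  (exists l, l \in Y /\ l \notin O) ->
  ~ identifiable R d G O X C Y.
Proof.
move=> HG hd XO _ [l [lY lO]] Hid.
pose c0 : asg d := [ffun i => Ordinal (ltn_trans (ltnSn 0) (hd i))].
pose c1 : asg d := [ffun i => if i == l then Ordinal (hd i) else c0 i].
have lX : l != X by apply/eqP => E; subst; rewrite XO in lO.
have c1X : c1 X = c0 X by rewrite ffunE eq_sym (negbTE lX).
pose pi := fun (w : asg d) (x : 'I_(d X)) => if x == c0 X then 1%R else 0%R : R.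
have hpi : is_policy C pi.
  split; [|split].
  - by move=> w x; rewrite /pi; case: ifP => _; [exact: ler01|exact: lexx].
  - move=> w; rewrite /pi (bigD1 (c0 X)) //= eqxx big1 ?addr0 // => x /negbTE ->.
  - by []. by [].
have c1E : forall i, i != l -> c1 i = c0 i by move=> i il; rewrite ffunE (negbTE il).
have Hobs : forall v, marg O (Pobs (mkM R n d G c0)) v = marg O (Pobs (mkM R n d G c1)) v.
  move=> v; rewrite !marg_Pobs; congr (if _ then _ else _).
  apply/forallP/forallP => h i; apply/implyP => iO; move/implyP: (h i) => /(_ iO);
    rewrite c1E //; by apply: contraNneq lO => <-.
have := Hid _ _ (mkM_in_class R n d G c0 HG) (mkM_in_class R n d G c1 HG) Hobs pi hpi c0.
rewrite !marg_Pdo; last 2 first.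
- by move=> w x; rewrite /pi c1X.
- by [].
have -> : agree Y c0 c0 by apply/forallP => i; rewrite eqxx implybT.
have -> : agree Y c1 c0 = false.
  apply/negbTE; rewrite negb_forall; apply/existsP; exists l.
  by rewrite lY /= !ffunE eqxx.
by move/eqP; rewrite oner_eq0.
Qed.
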